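(* Let $\Gamma$ be a finite monoid generating set of $V$. For $z \in \{0,1\}^+$ define $L_z = \{w \in \Gamma^+ : w(z0^\omega) \neq z0^\omega\}$. Then $L_z \subseteq \mathrm{cowp}_\Gamma(V)$, and $L_z^{\mathrm{rev}}$ is a deterministic context-free language over the alphabet $\Gamma$.
   Context: Thompson group $V$: a prefix code is a set $P \subseteq \{0,1\}^*$ in which no element is a proper prefix of another; it is maximal if it is contained in no larger prefix code. Each bijection $\varphi: P\to Q$ between finite maximal prefix codes defines a homeomorphism of the Cantor space $\{0,1\}^\omega$ by $pt \mapsto \varphi(p)t$ ($p\in P$, $t \in\{0,1\}^\omega$); $V$ is the group of all such homeomorphisms under composition. A monoid generating set $\Gamma \subseteq V$ is a set such that every element of $V$ is a product of elements of $\Gamma$; it is regarded as a finite alphabet. For $w = a_n \cdots a_1\in\Gamma^+$, $w(\cdot)$ denotes the homeomorphism $a_n\circ\cdots\circ a_1$ ($a_1$ applied first). $\mathrm{cowp}_\Gamma(V) = \{w\in\Gamma^* : w \text{ does not evaluate to the identity of } V\}$. $0^\omega$ is the all-zero sequence. $L^{\mathrm{rev}} = \{w^{\mathrm{rev}}: w\in L\}$ with $(a_1\cdots a_n)^{\mathrm{rev}} = a_n\cdots a_1$. *)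

(* Defs.v *)
From mathcomp Require Import all_boot.
Set Implicit Arguments. Unset Strict Implicit. Unset Printing Implicit Defensive.

Definition cantor := nat -> bool.

Definition cat_inf (p : seq bool) (t : cantor) : cantor :=
  fun n => if n < size p then nth false p n else t (n - size p).

Definition zeros : cantor := fun _ => false.

Definition is_prefix (u v : seq bool) : Prop := exists s, v = u ++ s.
Definition proper_prefix (u v : seq bool) : Prop := is_prefix u v /\ u <> v.

Definition prefix_code (P : seq bool -> Prop) : Prop :=
  forall u v, P u -> P v -> ~ proper_prefix u v.

Definition finite_maximal_prefix_code (P : seq (seq bool)) : Prop :=
  prefix_code (fun x => x \in P) /\
  forall R : seq bool -> Prop, prefix_code R ->
    (forall x, x \in P -> R x) -> forall x, R x -> x \in P.

(** f is an element of Thompson's group V: it is the homeomorphism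
    p t |-> phi(p) t induced by a bijection phi : P -> Q between finite
    maximal prefix codes. *)
Definition inV (f : cantor -> cantor) : Prop :=
  exists (P Q : seq (seq bool)) (phi : seq bool -> seq bool),
    [/\ finite_maximal_prefix_code P, finite_maximal_prefix_code Q,
        {in P, forall p, phi p \in Q},
        {in P &, injective phi} &
        {in Q, forall q, exists2 p, p \in P & phi p = q}] /\
    {in P, forall p, forall (t : cantor) (n : nat),
        f (cat_inf p t) n = cat_inf (phi p) t n}.

(** Evaluation of a word w = a_n ... a_1 (as the list [:: a_n; ...; a_1])
    as the homeomorphism g a_n o ... o g a_1 (a_1 applied first). *)
Definition eval_word (S : Type) (g : S -> cantor -> cantor) (w : seq S)
  : cantor -> cantor :=
  foldr (fun a h => g a \o h) id w.

(** Gamma = image of g is a monoid generating set of V. *)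
Definition monoid_generates (S : Type) (g : S -> cantor -> cantor) : Prop :=
  forall f, inV f -> exists w : seq S, forall x n, f x n = eval_word g w x n.

Definition cowp (S : Type) (g : S -> cantor -> cantor) (w : seq S) : Prop :=
  exists x n, eval_word g w x n != x n.

Definition Lz (S : Type) (g : S -> cantor -> cantor) (z : seq bool) (w : seq S)
  : Prop :=
  w <> [::] /\
  exists n, eval_word g w (cat_inf z zeros) n != cat_inf z zeros n.

Definition lang_rev (S : Type) (L : seq S -> Prop) : seq S -> Prop :=
  fun u => exists w, L w /\ u = rev w.

Record dpda (S : finType) : Type := Dpda {
  dp_state : finType;
  dp_stack : finType;
  dp_start : dp_state;
  dp_bottom : dp_stack;
  dp_final : pred dp_state;
  dp_delta : dp_state -> option S -> dp_stack -> option (dp_state * seq dp_stack);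
  dp_det : forall q X, dp_delta q None X <> None ->
             forall a, dp_delta q (Some a) X = None
}.

Section DPDA.
Variables (S : finType) (M : dpda S).

Definition dp_config := (@dp_state S M * seq S * seq (@dp_stack S M))%type.

Inductive dp_step : dp_config -> dp_config -> Prop :=
| dp_step_read q a w X gam p beta :
    @dp_delta S M q (Some a) X = Some (p, beta) ->
    dp_step (q, a :: w, X :: gam) (p, w, beta ++ gam)
| dp_step_eps q w X gam p beta :
    @dp_delta S M q None X = Some (p, beta) ->
    dp_step (q, w, X :: gam) (p, w, beta ++ gam).

Inductive dp_steps : dp_config -> dp_config -> Prop :=
| dp_steps_refl c : dp_steps c c
| dp_steps_cons c1 c2 c3 : dp_step c1 c2 -> dp_steps c2 c3 -> dp_steps c1 c3.

Definition dp_accepts (w : seq S) : Prop :=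
  exists q gam, @dp_final S M q /\
    dp_steps (@dp_start S M, w, [:: @dp_bottom S M]) (q, [::], gam).
End DPDA.

Definition DCFL (S : finType) (L : seq S -> Prop) : Prop :=
  exists M : dpda S, forall w, L w <-> dp_accepts M w.

(* Main.v *)
Require Import Defs.
From mathcomp Require Import all_boot.
From Stdlib Require Import FunctionalExtensionality Classical ClassicalEpsilon.
From mathcomp Require Import zify.
Set Implicit Arguments. Unset Strict Implicit. Unset Printing Implicit Defensive.


Definition Point (u : seq bool) : cantor := cat_inf u zeros.

Lemma PointE u n : Point u n = nth false u n.
Proof. rewrite /Point /cat_inf; case: ltnP => // h; by rewrite nth_default. Qed.

Lemma cat_inf_cat p q t : cat_inf (p ++ q) t = cat_inf p (cat_inf q t).
Proof.
apply: functional_extensionality => n; rewrite /cat_inf size_cat nth_cat.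
case: (ltnP n (size p)) => h1.
  by rewrite (leq_trans h1) // leq_addr.
rewrite ltn_subLR // subnDA //.
Qed.

Lemma Point_cat p v : Point (p ++ v) = cat_inf p (Point v).
Proof. by rewrite /Point cat_inf_cat. Qed.

Lemma Point_behead v : Point v = cat_inf [:: nth false v 0] (Point (behead v)).
Proof.
apply: functional_extensionality => n; rewrite /cat_inf /=.
case: n => [|n] //=; first by rewrite PointE.
by rewrite subn1 /= !PointE nth_behead.
Qed.

Lemma cat_inf_rcons p b t : cat_inf (rcons p b) t = cat_inf p (cat_inf [:: b] t).
Proof. by rewrite -cats1 cat_inf_cat. Qed.

Lemma cover P x : finite_maximal_prefix_code P ->
  exists2 p, p \in P & forall i, i < size p -> nth false p i = x i.
Proof.
case=> hP hM.
set K := \max_(p <- P) size p.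
have hK : forall p, p \in P -> size p <= K.
  by move=> p pP; rewrite /K (big_rem p pP) /= leq_maxl.
set y := mkseq x K.
have fromP : forall p, p \in P -> prefix p y -> forall i, i < size p -> nth false p i = x i.
  move=> p pP /prefixP [s ys] i hi.
  have hiK : i < K by apply: leq_trans hi (hK _ pP).
  by have := congr1 (fun l => nth false l i) ys; rewrite nth_cat hi /y nth_mkseq // => <-.
case: (boolP (has (fun p => prefix p y) P)).
  by case/hasP=> p pP hp; exists p => //; apply: fromP.
move=> /hasPn hn.
have yP : y \in P.
  apply: (hM (fun v => v \in P \/ v = y)); last by right.
  - move=> u v [uP|->] [vP|->].
    + exact: hP.
    + by case=> [[s ys] _]; have := hn _ uP; rewrite ys prefix_prefix.
    + case=> [[s vs] ne]; have := hK _ vP; rewrite vs size_cat /y size_mkseq.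
      case: s vs ne => [|c s] vs; first by rewrite vs cats0.
      by move=> _ /=; rewrite -[X in _ <= X]addn0 leq_add2l.
    + by case=> _.
  - by move=> u; left.
by have := hn _ yP; rewrite prefix_refl.
Qed.

Section Ann.
Variable z : seq bool.

Definition eq0 (v w : seq bool) : bool :=
  all (fun i => nth false v i == nth false w i) (iota 0 (maxn (size v) (size w))).

Lemma eq0P v w : reflect (forall n, nth false v n = nth false w n) (eq0 v w).
Proof.
apply: (iffP allP) => [h n|h i _]; last by rewrite h.
case: (ltnP n (maxn (size v) (size w))) => hn.
  by apply/eqP/h; rewrite mem_iota.
by rewrite !nth_default // (leq_trans _ hn) // ?leq_maxl ?leq_maxr.
Qed.

Lemma eq0_Point v w : eq0 v w -> Point v = Point w.
Proof. by move/eq0P=> h; apply: functional_extensionality => n; rewrite !PointE. Qed.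

Lemma Point_eq0 v w : Point v = Point w -> eq0 v w.
Proof. by move=> h; apply/eq0P => n; rewrite -!PointE h. Qed.

Definition Ann := {ffun 'I_(size z).+1 -> bool}.
Definition annf (v : seq bool) : Ann := [ffun k : 'I_(size z).+1 => eq0 v (drop k z)].
Definition succo (k : 'I_(size z).+1) : 'I_(size z).+1 := inord (minn k.+1 (size z)).
Definition nextann (b : bool) (A : Ann) : Ann :=
  [ffun k : 'I_(size z).+1 => (b == nth false z k) && A (succo k)].
Definition annw (w : seq bool) (A : Ann) : Ann := foldr nextann A w.

Lemma succo_nth (k : 'I_(size z).+1) n : nth false z (succo k + n) = nth false z (k.+1 + n).
Proof.
rewrite /succo inordK; last by rewrite ltnS geq_minr.
case: (ltnP k (size z)) => h; first by rewrite (minn_idPl h).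
rewrite (minn_idPr (leqW h)) !nth_default //; lia.
Qed.

Lemma annf_cons b v : annf (b :: v) = nextann b (annf v).
Proof.
apply/ffunP => k; rewrite !ffunE.
apply/idP/idP.
  move/eq0P=> h; apply/andP; split.
    by have := h 0; rewrite nth_drop addn0 /= => ->.
  by apply/eq0P => n; have := h n.+1; rewrite /= !nth_drop succo_nth addnS.
case/andP=> /eqP hb /eq0P h; apply/eq0P => -[|n] /=.
  by rewrite nth_drop addn0.
by rewrite h !nth_drop succo_nth addnS.
Qed.

Lemma annw_cat w v : annw w (annf v) = annf (w ++ v).
Proof. by elim: w => //= b w ->; rewrite annf_cons. Qed.

Definition SSym := option (bool * Ann).

Fixpoint encode (v : seq bool) : seq SSym :=
  match v with [::] => [:: None] | b :: v' => Some (b, annf v') :: encode v' end.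

Fixpoint cells (w : seq bool) (A : Ann) : seq SSym :=
  match w with [::] => [::] | b :: w' => Some (b, annw w' A) :: cells w' A end.

Lemma cells_encode w v : cells w (annf v) ++ encode v = encode (w ++ v).
Proof. by elim: w => //= b w ->; rewrite annw_cat. Qed.

Definition annOf (X : SSym) : Ann :=
  match X with None => annf [::] | Some (b, A) => nextann b A end.

Definition topS v : SSym := match v with [::] => None | b :: v' => Some (b, annf v') end.


Lemma annOf_top v : annOf (topS v) = annf v.
Proof. by case: v => //= b v; rewrite annf_cons. Qed.

End Ann.

Section Gen.
Variables (S : finType) (M : dpda S).

Lemma dp_step_det c c1 c2 : @dp_step S M c c1 -> @dp_step S M c c2 -> c1 = c2.
Proof.
case=> [q a w X gam p beta h|q w X gam p beta h] H2; inversion H2; subst.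
- by move: h; rewrite H6 => -[-> ->].
- by move: h; rewrite (@dp_det S M q X) ?H5.
- by move: H5; rewrite (@dp_det S M q X) ?h.
- by move: h; rewrite H5 => -[-> ->].
Qed.

Lemma dp_steps_trans c1 c2 c3 : @dp_steps S M c1 c2 -> @dp_steps S M c2 c3 -> @dp_steps S M c1 c3.
Proof. elim=> // a b c s _ IH h; apply: dp_steps_cons s (IH h). Qed.

Lemma dp_steps_stuck c d e : @dp_steps S M c d -> (forall d', ~ @dp_step S M d d') ->
  @dp_steps S M c e -> @dp_steps S M e d.
Proof.
elim=> [c0|c1 c2 c3 s12 s23 IH] hd he.
  case: he hd => [c0'|c0' c2' c3' s _] hd; first exact: dp_steps_refl.
  by case: (hd _ s).
case: he s12 IH => [c1'|c1' c2' c3' s' h'] s12 IH; first exact: dp_steps_cons s12 s23.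
by rewrite (dp_step_det s12 s') in IH; apply: IH.
Qed.

Lemma dp_steps_stuck_eq d e : @dp_steps S M e d -> (forall d', ~ @dp_step S M e d') -> e = d.
Proof. by case=> // c1 c2 c3 s _ h; case: (h _ s). Qed.
End Gen.

Section Machine.
Variables (Sigma : finType) (g : Sigma -> cantor -> cantor)
  (PP : Sigma -> seq (seq bool)) (phi : Sigma -> seq bool -> seq bool) (z : seq bool).
Hypothesis HP : forall a, finite_maximal_prefix_code (PP a).
Hypothesis Hact : forall a, {in PP a, forall p t, g a (cat_inf p t) = cat_inf (phi a p) t}.

Definition nodes0 : seq (seq bool) :=
  flatten [seq [seq take i p | i <- iota 0 (size p).+1] | p <- flatten [seq PP a | a <- enum Sigma]].
Definition nodes := [::] :: nodes0.
Definition Idx := 'I_(size nodes0).+1.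
Definition node (p : seq bool) : Idx := inord (index p nodes).

Lemma nodeK p : p \in nodes -> nth [::] nodes (node p) = p.
Proof. by move=> h; rewrite /node inordK ?nth_index // -[X in _ < X.+1]/(size nodes).-1 index_mem h. Qed.

Lemma take_nodes a p i : p \in PP a -> i <= size p -> take i p \in nodes.
Proof.
move=> hp hi; rewrite inE; apply/orP; right; apply/flatten_mapP; exists p.
  by apply/flatten_mapP; exists a => //; rewrite mem_enum.
by apply/mapP; exists i => //; rewrite mem_iota.
Qed.

Definition St := option (bool + (Sigma * Idx)).
Definition Sym := SSym z.

Definition delta (q : St) (o : option Sigma) (X : Sym) : option (St * seq Sym) :=
  match q, o with
  | None, None => Some (Some (inl false), cells z (annOf X) ++ [:: X])
  | Some (inl f), Some a => Some (Some (inr (a, node [::])), [:: X])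
  | Some (inr (a, i)), None =>
      let p := nth [::] nodes i in
      if p \in PP a then
        Some (Some (inl (~~ annw (phi a p) (annOf X) ord0)), cells (phi a p) (annOf X) ++ [:: X])
      else match X with
           | None => Some (Some (inr (a, node (rcons p false))), [:: None])
           | Some (b, _) => Some (Some (inr (a, node (rcons p b))), [::])
           end
  | _, _ => None
  end.

Lemma delta_det q X : delta q None X <> None -> forall a, delta q (Some a) X = None.
Proof. by case: q => [[f|[a i]]|] //=. Qed.

Definition final (q : St) : bool := if q is Some (inl f) then f else false.

Definition Mach : dpda Sigma := @Dpda Sigma _ _ None None final delta delta_det.


Lemma step_eps q X p' beta w st st' gam : delta q None X = Some (p', beta) ->
  st = X :: gam -> st' = beta ++ gam -> @dp_step Sigma Mach (q, w, st) (p', w, st').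
Proof. by move=> h -> ->; apply: (@dp_step_eps _ Mach). Qed.

Lemma step_read q a X p' beta w st st' gam : delta q (Some a) X = Some (p', beta) ->
  st = X :: gam -> st' = beta ++ gam -> @dp_step Sigma Mach (q, a :: w, st) (p', w, st').
Proof. by move=> h -> ->; apply: (@dp_step_read _ Mach). Qed.

Lemma encode_split v : encode z v = topS z v :: behead (encode z v).
Proof. by case: v. Qed.

Lemma walk_done a p v r : p \in nodes -> p \in PP a ->
  exists v', @dp_steps Sigma Mach (Some (inr (a, node p)), r, encode z v)
                           (Some (inl (~~ eq0 v' z)), r, encode z v') /\
             Point v' = g a (cat_inf p (Point v)).
Proof.
move=> pN hp; exists (phi a p ++ v); split; last by rewrite Point_cat Hact.
apply: dp_steps_cons; last exact: dp_steps_refl.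
have hd : delta (Some (inr (a, node p))) None (topS z v) =
   Some (Some (inl (~~ eq0 (phi a p ++ v) z)), cells (phi a p) (annf z v) ++ [:: topS z v]).
  by rewrite /= nodeK // hp annOf_top annw_cat ffunE drop0.
apply: (step_eps _ hd (encode_split v)).
by rewrite -catA /= -encode_split cells_encode.
Qed.

Lemma walk a pst r : pst \in PP a -> forall k p v, size pst - size p = k ->
  size p <= size pst -> take (size p) pst = p ->
  (forall i, i < size pst -> nth false pst i = cat_inf p (Point v) i) ->
  exists v', @dp_steps Sigma Mach (Some (inr (a, node p)), r, encode z v)
                           (Some (inl (~~ eq0 v' z)), r, encode z v') /\
             Point v' = g a (cat_inf p (Point v)).
Proof.
move=> hpst; elim=> [|k IH] p v hk hle htk hpre;
  (have pN : p \in nodes by rewrite -htk; exact: (take_nodes hpst hle));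
  case: (boolP (p \in PP a)) => hp; try exact: walk_done.
  have e : size p = size pst by lia.
  by move: hp; rewrite -htk e take_size hpst.
have hlt : size p < size pst by lia.
set b := nth false v 0.
have hb : nth false pst (size p) = b.
  by rewrite hpre // /cat_inf ltnn subnn PointE.
have h1 : size pst - size (rcons p b) = k by rewrite size_rcons; lia.
have h2 : size (rcons p b) <= size pst by rewrite size_rcons.
have h3 : take (size (rcons p b)) pst = rcons p b.
  by rewrite size_rcons (take_nth false hlt) htk hb.
have h4 : forall i, i < size pst -> nth false pst i = cat_inf (rcons p b) (Point (behead v)) i.
  by move=> i hi; rewrite hpre // cat_inf_rcons -Point_behead.
have [v' [st ev']] := IH (rcons p b) (behead v) h1 h2 h3 h4.
exists v'; split; last by rewrite ev' cat_inf_rcons -Point_behead.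
apply: dp_steps_cons st.
clear h1 h2 h3 h4 hb ev' hpre; subst b; case: v => [|c v].
  have hd : delta (Some (inr (a, node p))) None None =
     Some (Some (inr (a, node (rcons p false))), [:: None]).
    by rewrite /= nodeK // (negbTE hp).
  exact: (step_eps _ hd (erefl _) (erefl _)).
have hd : delta (Some (inr (a, node p))) None (Some (c, annf z v)) =
   Some (Some (inr (a, node (rcons p c))), [::]).
  by rewrite /= nodeK // (negbTE hp).
exact: (step_eps _ hd (erefl _) (erefl _)).
Qed.


Lemma cat_inf_nil t : cat_inf [::] t = t.
Proof. by apply: functional_extensionality => n; rewrite /cat_inf /= subn0. Qed.

Lemma gen_step a f v r : exists v',
  @dp_steps Sigma Mach (Some (inl f), a :: r, encode z v) (Some (inl (~~ eq0 v' z)), r, encode z v')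
  /\ Point v' = g a (Point v).
Proof.
have [pst hpst hpre] := cover (Point v) (HP a).
have [v' [st ev']] := walk (p:=[::]) (v:=v) r hpst (erefl _) (leq0n _) (take0 _)
   (fun i hi => etrans (hpre i hi) (congr1 (fun t => t i) (esym (cat_inf_nil (Point v))))).
exists v'; split; last by rewrite ev' cat_inf_nil.
apply: dp_steps_cons st.
have hd : delta (Some (inl f)) (Some a) (topS z v) = Some (Some (inr (a, node [::])), [:: topS z v]) by [].
exact: (step_read _ hd (encode_split v) (encode_split v)).
Qed.

Lemma eval_rcons s a x : eval_word g (rcons s a) x = eval_word g s (g a x).
Proof. by elim: s => //= b s IH; rewrite IH. Qed.

Lemma run u : forall v f, exists v' f',
  @dp_steps Sigma Mach (Some (inl f), u, encode z v) (Some (inl f'), [::], encode z v') /\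
  Point v' = eval_word g (rev u) (Point v) /\
  (u <> [::] -> (f' <-> Point v' <> Point z)) /\ (u = [::] -> f' = f).
Proof.
elim: u => [|a u IH] v f.
  by exists v, f; split; [exact: dp_steps_refl|split].
have [v1 [st1 e1]] := gen_step a f v u.
have [v' [f' [st [e [hne he]]]]] := IH v1 (~~ eq0 v1 z).
exists v', f'; split; first exact: dp_steps_trans st1 st.
split; first by rewrite rev_cons eval_rcons e e1.
split => // _.
clear st1 st; case: u IH e hne he => [|c u] _ e hne he.
  rewrite he //= in e *; rewrite e; split.
    by move=> /negP h1 h2; apply: h1; apply: Point_eq0.
  by move=> h; apply/negP => h1; apply: h; apply: eq0_Point.
by apply: hne.
Qed.

Lemma stuck f st : forall d', ~ @dp_step Sigma Mach (Some (inl f), [::], st) d'.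
Proof. by move=> d' h; inversion h. Qed.

Lemma accept u : lang_rev (Lz g z) u <-> dp_accepts Mach u.
Proof.
have [v' [f' [hs [hp [hne he]]]]] := run u z false.
have hd : delta None None None = Some (Some (inl false), cells z (annf z [::]) ++ [:: None]) by [].
have st0 : @dp_step Sigma Mach (None, u, [:: None]) (Some (inl false), u, encode z z).
  by apply: (step_eps _ hd (erefl _)); rewrite cats0 -[X in encode z X]cats0 -cells_encode.
have hall := dp_steps_cons st0 hs.
split.
  case=> w [[wne [n hn]] hu].
  have une : u <> [::] by move=> h; apply: wne; rewrite -(revK w) -hu h.
  have ft : f' = true.
    apply/(hne une) => h; move: hn; rewrite -(revK w) -hu -hp h.
    by rewrite /Point eqxx.
  by exists (Some (inl f')), (encode z v'); split; [rewrite /= ft|].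
case=> q [gam [hq hsteps]].
have h2 := dp_steps_stuck hall (@stuck _ _) hsteps.
have qe : q = Some (inl true) by clear hsteps; case: q hq h2 => [[[]|[a i]]|] //.
rewrite qe in h2; have := dp_steps_stuck_eq h2 (@stuck _ _); case=> ft _.
have une : u <> [::] by move=> h; move: (he h); rewrite -ft.
have [hP _] := hne une; have hneq := hP (esym ft).
exists (rev u); split; last by rewrite revK.
split; first by move=> h; apply: une; rewrite -(revK u) h.
apply: NNPP => H; apply: hneq; rewrite hp; apply: functional_extensionality => n.
by apply/eqP/negPn/negP => hn; apply: H; exists n.
Qed.

End Machine.

Theorem lemma3p3 (Sigma : finType) (g : Sigma -> cantor -> cantor)
  (HV : forall a, inV (g a)) (Hinj : injective g)
  (Hgen : monoid_generates g)
  (z : seq bool) (Hz : z <> [::]) :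
  (forall w, Lz g z w -> cowp g w) /\ DCFL (lang_rev (Lz g z)).
Proof.
split.
  by move=> w [_ [n hn]]; exists (cat_inf z zeros), n.
have H : forall a, {Pp : seq (seq bool) * (seq bool -> seq bool) |
   finite_maximal_prefix_code Pp.1 /\
   {in Pp.1, forall p t, g a (cat_inf p t) = cat_inf (Pp.2 p) t}}.
  move=> a; apply: constructive_indefinite_description.
  case: (HV a) => P [Q [ph [[hP _ _ _ _] hact]]].
  exists (P, ph); split => // p hp t; apply: functional_extensionality => n; exact: hact.
exists (Mach (fun a => (sval (H a)).1) (fun a => (sval (H a)).2) z) => u.
apply: accept => a; [exact: (proj1 (svalP (H a))) | exact: (proj2 (svalP (H a)))].
Qed.
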